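(* Let $k\ge1$, $n\ge 2k$ and $0\le i\le n-2$ be integers. For $j\in\mathbb Z$ put \[ A_{i,j}=\binom{i}{\lceil i/2\rceil-j(n-k+2)}-\binom{i}{\lfloor (i+n-k)/2\rfloor+1-j(n-k+2)}, \] \[ B_{i,j}=\binom{i}{\lceil i/2\rceil-j(n-k+1)}-\binom{i}{\lfloor (i+n-k-1)/2\rfloor+1-j(n-k+1)}, \] \[ C_{i,j}=\binom{i}{\lceil i/2\rceil-j(n-k)}-\binom{i}{\lfloor (i+n-k-2)/2\rfloor+1-j(n-k)}. \] Then \[ \sum_{j\in\mathbb Z}\bigl(-A_{i,j}+2B_{i,j}-C_{i,j}\bigr) =\binom{i+1}{\lfloor\frac{i+n-k}{2}\rfloor+1}+\binom{i+1}{\lfloor\frac{i+n-k}{2}\rfloor-n+k} -2\left(\binom{i}{\lfloor\frac{i+n-k-1}{2}\rfloor+1}+\binom{i}{\lfloor\frac{i+n-k-1}{2}\rfloor-n+k}\right). \]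
   Context: Convention: $\binom{a}{b}=0$ if $b<0$ or $b>a$. *)

(* Defs.v *)
From Stdlib Require Import ZArith Arith List.
Open Scope Z_scope.

Fixpoint binN (a b : nat) : nat :=
  match a, b with
  | _, O => 1%nat
  | O, S _ => 0%nat
  | S a', S b' => (binN a' b' + binN a' b)%nat
  end.

(* Integer binomial with the convention C(a,b) = 0 if b < 0 or b > a
   (for a >= 0; for a < 0 we also return 0, never used here). *)
Definition binZ (a b : Z) : Z :=
  if orb (b <? 0) (a <? b) then 0 else Z.of_nat (binN (Z.to_nat a) (Z.to_nat b)).

(* sum_{j = -N}^{N} f j *)
Definition symsum (N : nat) (f : Z -> Z) : Z :=
  fold_right Z.add 0 (map (fun t : nat => f (Z.of_nat t - Z.of_nat N)) (seq 0 (2 * N + 1))).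

Definition ceil2 (x : Z) : Z := (x + 1) / 2.
Definition floor2 (x : Z) : Z := x / 2.

Definition Aij (n k i j : Z) : Z :=
  binZ i (ceil2 i - j * (n - k + 2)) - binZ i (floor2 (i + n - k) + 1 - j * (n - k + 2)).
Definition Bij (n k i j : Z) : Z :=
  binZ i (ceil2 i - j * (n - k + 1)) - binZ i (floor2 (i + n - k - 1) + 1 - j * (n - k + 1)).
Definition Cij (n k i j : Z) : Z :=
  binZ i (ceil2 i - j * (n - k)) - binZ i (floor2 (i + n - k - 2) + 1 - j * (n - k)).

(* Main.v *)
Require Import Defs.
From Stdlib Require Import ZArith Arith Lia List.
Open Scope Z_scope.

Lemma binN_lt : forall a b, (a < b)%nat -> binN a b = 0%nat.
Proof.
  induction a; intros b H; destruct b; simpl; try lia; auto.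
  rewrite !IHa; lia.
Qed.

Lemma binZ_out a b : b < 0 \/ a < b -> binZ a b = 0.
Proof.
  intros H; unfold binZ.
  destruct H as [H|H]; [apply Z.ltb_lt in H; rewrite H | apply Z.ltb_lt in H; rewrite H, Bool.orb_true_r]; reflexivity.
Qed.

Lemma pascal a b : 0 <= a -> binZ (a+1) b = binZ a b + binZ a (b-1).
Proof.
  intros Ha.
  destruct (Z_lt_le_dec b 0).
  { rewrite !binZ_out by lia. reflexivity. }
  destruct (Z.eq_dec b 0).
  { subst. rewrite (binZ_out a (0-1)) by lia. unfold binZ. simpl.
    replace (a + 1 <? 0) with false by (symmetry; apply Z.ltb_ge; lia).
    replace (a <? 0) with false by (symmetry; apply Z.ltb_ge; lia).
    simpl. destruct (Z.to_nat (a+1)), (Z.to_nat a); reflexivity. }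
  destruct (Z_lt_le_dec (a+1) b).
  { rewrite !binZ_out by lia. reflexivity. }
  unfold binZ.
  replace (b <? 0) with false by (symmetry; apply Z.ltb_ge; lia).
  replace (b - 1 <? 0) with false by (symmetry; apply Z.ltb_ge; lia).
  replace (a + 1 <? b) with false by (symmetry; apply Z.ltb_ge; lia).
  replace (a <? b - 1) with false by (symmetry; apply Z.ltb_ge; lia).
  simpl.
  replace (Z.to_nat (a+1)) with (S (Z.to_nat a)) by lia.
  replace (Z.to_nat b) with (S (Z.to_nat (b-1))) by lia.
  simpl.
  destruct (a <? b) eqn:E.
  - apply Z.ltb_lt in E. rewrite (binN_lt (Z.to_nat a) (S (Z.to_nat (b-1)))) by lia. lia.
  - simpl. lia.
Qed.

Fixpoint sumL (l : list Z) : Z := match l with nil => 0 | x :: l => x + sumL l end.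

Lemma sumL_fold l : fold_right Z.add 0 l = sumL l.
Proof. induction l; simpl; auto. Qed.

Lemma sumL_app l l' : sumL (l ++ l') = sumL l + sumL l'.
Proof. induction l; simpl; lia. Qed.

Lemma sumL_zero (g : nat -> Z) l : (forall x, In x l -> g x = 0) -> sumL (map g l) = 0.
Proof. induction l; simpl; intros H; auto. rewrite H, IHl; auto. Qed.

Lemma symsum01 (N : nat) (f : Z -> Z) : (1 <= N)%nat ->
  (forall j, j <= -1 \/ 2 <= j -> f j = 0) -> symsum N f = f 0 + f 1.
Proof.
  intros HN Hf. unfold symsum. rewrite sumL_fold.
  replace (2 * N + 1)%nat with (N + (2 + (N - 1)))%nat by lia.
  rewrite !seq_app, !map_app, !sumL_app.
  rewrite (sumL_zero _ (seq 0 N)).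
  2:{ intros x Hx. apply in_seq in Hx. apply Hf. lia. }
  rewrite (sumL_zero _ (seq (0 + N + 2) (N - 1))).
  2:{ intros x Hx. apply in_seq in Hx. apply Hf. lia. }
  replace (0 + N)%nat with N by lia.
  cbn [seq map sumL].
  replace (Z.of_nat N - Z.of_nat N) with 0 by lia.
  replace (Z.of_nat (S N) - Z.of_nat N) with 1 by lia. lia.
Qed.

Lemma div2b x : 2 * (x / 2) <= x <= 2 * (x/2) + 1.
Proof. pose proof (Z.div_mod x 2). pose proof (Z.mod_pos_bound x 2). lia. Qed.

Theorem mainTheorem10 (k n i : Z) (N : nat) :
  1 <= k -> 2 * k <= n -> 0 <= i <= n - 2 -> i + 1 <= Z.of_nat N ->
  symsum N (fun j => - Aij n k i j + 2 * Bij n k i j - Cij n k i j)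
  = binZ (i + 1) (floor2 (i + n - k) + 1) + binZ (i + 1) (floor2 (i + n - k) - n + k)
    - 2 * (binZ i (floor2 (i + n - k - 1) + 1) + binZ i (floor2 (i + n - k - 1) - n + k)).
Proof.
  intros H1 H2 H3 H4.
  unfold Aij, Bij, Cij, ceil2, floor2.
  pose proof (div2b (i+1)). pose proof (div2b (i+n-k)).
  pose proof (div2b (i+n-k-1)). pose proof (div2b (i+n-k-2)).
  remember ((i+1)/2) as h. remember ((i+n-k)/2) as a.
  remember ((i+n-k-1)/2) as b. remember ((i+n-k-2)/2) as c.
  assert (c = a - 1) by lia. subst c.
  clear Heqh Heqa Heqb.
  rewrite symsum01 by (try lia; intros j Hj; rewrite !(binZ_out i) by nia; lia).
  rewrite !pascal by lia.
  rewrite !(binZ_out i (h - 1 * _)) by lia.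
  rewrite !H7.
  replace (h - 0 * (n - k + 2)) with h by lia.
  replace (h - 0 * (n - k + 1)) with h by lia.
  replace (h - 0 * (n - k)) with h by lia.
  replace (a + 1 - 0 * (n - k + 2)) with (a + 1) by lia.
  replace (b + 1 - 0 * (n - k + 1)) with (b + 1) by lia.
  replace (a - 1 + 1 - 0 * (n - k)) with (a + 1 - 1) by lia.
  replace (a + 1 - 1 * (n - k + 2)) with (a - n + k - 1) by lia.
  replace (b + 1 - 1 * (n - k + 1)) with (b - n + k) by lia.
  replace (a - 1 + 1 - 1 * (n - k)) with (a - n + k) by lia.
  lia.
Qed.
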